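(* For every tetrahedral erasure channel $W$, $A(W^{s})+A(W^{p})\le A(W)$.
   Context: $\mathrm{TEC}(p,q,r,s,t)$ denotes a tetrahedral erasure channel with parameters $p,q,r,s,t\ge0$ summing to $1$; its moment of inertia is $A=(q-r)^2+(r-s)^2+(s-q)^2$. For $W=\mathrm{TEC}(p,q,r,s,t)$, the serial child is $W^{s}=\mathrm{TEC}(p^2,\ ps+sq+qp,\ pq+qr+rp,\ pr+rs+sp,\ 1-\text{(sum of the other four)})$ and the parallel child is $W^{p}=\mathrm{TEC}(1-\text{(sum of the other four)},\ ts+sq+qt,\ tq+qr+rt,\ tr+rs+st,\ t^2)$. *)

(* Defs.v *)
From Stdlib Require Import Reals Lra.
Open Scope R_scope.

Record TEC := mkTEC { tp : R; tq : R; tr : R; ts : R; tt : R }.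

Definition valid_TEC (W : TEC) : Prop :=
  0 <= tp W /\ 0 <= tq W /\ 0 <= tr W /\ 0 <= ts W /\ 0 <= tt W /\
  tp W + tq W + tr W + ts W + tt W = 1.

Definition inertia (W : TEC) : R :=
  (tq W - tr W)^2 + (tr W - ts W)^2 + (ts W - tq W)^2.

Definition serial_child (W : TEC) : TEC :=
  let p := tp W in let q := tq W in let r := tr W in let s := ts W in
  let p' := p^2 in
  let q' := p*s + s*q + q*p in
  let r' := p*q + q*r + r*p in
  let s' := p*r + r*s + s*p in
  mkTEC p' q' r' s' (1 - (p' + q' + r' + s')).

Definition parallel_child (W : TEC) : TEC :=
  let q := tq W in let r := tr W in let s := ts W in let t := tt W in
  let q' := t*s + s*q + q*t in
  let r' := t*q + q*r + r*t in
  let s' := t*r + r*s + s*t in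
  let t' := t^2 in
  mkTEC (1 - (q' + r' + s' + t')) q' r' s' t'.

(* Main.v *)
Require Import Defs.
From Stdlib Require Import Reals Lra Psatz.
Open Scope R_scope.
Open Scope R_scope.
Definition F q r s := (s-r)^2*((r+s)^2+2*q*(r+s)-q^2) + (q-s)^2*((q+s)^2+2*r*(q+s)-r^2) + (r-q)^2*((q+r)^2+2*s*(q+r)-s^2).
Lemma Ford q r s : 0<=s -> s<=r -> r<=q -> 0 <= F q r s.
Proof. intros. unfold F.
 assert (h1: 0 <= (q+s)^2+2*r*(q+s)-r^2) by nra.
 assert (h2: 0 <= (q+r)^2+2*s*(q+r)-s^2) by nra.
 assert (h3: (s-r)^2 <= (q-s)^2) by nra.
 assert (h4: 0 <= ((r+s)^2+2*q*(r+s)-q^2) + ((q+s)^2+2*r*(q+s)-r^2)) by nra.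
 assert (h5: (q-s)^2*((q+s)^2+2*r*(q+s)-r^2) >= (s-r)^2*((q+s)^2+2*r*(q+s)-r^2)) by nra.
 assert (h6: 0 <= (s-r)^2*(((r+s)^2+2*q*(r+s)-q^2) + ((q+s)^2+2*r*(q+s)-r^2))) by (apply Rmult_le_pos; [nra|lra]).
 assert (h7: 0 <= (r-q)^2*((q+r)^2+2*s*(q+r)-s^2)) by (apply Rmult_le_pos; [nra|lra]).
 lra. Qed.
Lemma Fall q r s : 0<=q -> 0<=r -> 0<=s -> 0 <= F q r s.
Proof. intros.
 assert (S1: F q r s = F r q s) by (unfold F; ring).
 assert (S2: F q r s = F q s r) by (unfold F; ring).
 assert (S3: F q r s = F s r q) by (unfold F; ring).
 assert (S4: F q r s = F r s q) by (unfold F; ring).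
 assert (S5: F q r s = F s q r) by (unfold F; ring).
 destruct (Rle_dec s r); destruct (Rle_dec r q); destruct (Rle_dec s q).
 all: first [ apply Ford; lra
   | rewrite S1; apply Ford; lra | rewrite S2; apply Ford; lra | rewrite S3; apply Ford; lra
   | rewrite S4; apply Ford; lra | rewrite S5; apply Ford; lra ].
Qed.
Lemma key q r s : 0<=q -> 0<=r -> 0<=s -> q+r+s<=1 ->
 (s-r)^2*((1-r-s)^2+q*q)+(q-s)^2*((1-q-s)^2+r*r)+(r-q)^2*((1-q-r)^2+s*s) <= (s-r)^2+(q-s)^2+(r-q)^2.
Proof. intros. pose proof (Fall q r s H H0 H1). set (k := 1-q-r-s).
 assert (E: (s-r)^2+(q-s)^2+(r-q)^2 - ((s-r)^2*((1-r-s)^2+q*q)+(q-s)^2*((1-q-s)^2+r*r)+(r-q)^2*((1-q-r)^2+s*s))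
   = F q r s + 2*k*((s-r)^2*(r+s) + (q-s)^2*(q+s) + (r-q)^2*(q+r))).
 { unfold k, F. ring. }
 assert (0 <= k) by (unfold k; lra).
 assert (0 <= (s-r)^2*(r+s) + (q-s)^2*(q+s) + (r-q)^2*(q+r)).
 { assert (0<=(s-r)^2*(r+s)) by (apply Rmult_le_pos; [apply pow2_ge_0|lra]).
   assert (0<=(q-s)^2*(q+s)) by (apply Rmult_le_pos; [apply pow2_ge_0|lra]).
   assert (0<=(r-q)^2*(q+r)) by (apply Rmult_le_pos; [apply pow2_ge_0|lra]). lra. }
 assert (0 <= 2*k*((s-r)^2*(r+s) + (q-s)^2*(q+s) + (r-q)^2*(q+r))) by (apply Rmult_le_pos; lra).
 lra. Qed.
Theorem mainTheorem4 (W : TEC) (hW : valid_TEC W) :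
  inertia (serial_child W) + inertia (parallel_child W) <= inertia W.
Proof.
  destruct W as [p q r s t]; unfold valid_TEC, inertia, serial_child, parallel_child in *; simpl in *.
  destruct hW as [hp [hq [hr [hs [ht hsum]]]]].
  assert (Hp : p = 1 - q - r - s - t) by lra. subst p.
  pose proof (key q r s hq hr hs ltac:(lra)).
  assert (E: forall a b c, ((1-q-r-s-t)*a+a*b+b*(1-q-r-s-t) - ((1-q-r-s-t)*b+b*c+c*(1-q-r-s-t)))^2
     + (t*a+a*b+b*t - (t*b+b*c+c*t))^2 = (a-c)^2*((1-q-r-s-t+b)^2+(t+b)^2)) by (intros; ring).
  assert (B1: (s-r)^2*((1-q-r-s-t+q)^2+(t+q)^2) <= (s-r)^2*((1-r-s)^2+q*q)).
  { apply Rmult_le_compat_l; [apply pow2_ge_0|nra]. }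
  assert (B2: (q-s)^2*((1-q-r-s-t+r)^2+(t+r)^2) <= (q-s)^2*((1-q-s)^2+r*r)).
  { apply Rmult_le_compat_l; [apply pow2_ge_0|nra]. }
  assert (B3: (r-q)^2*((1-q-r-s-t+s)^2+(t+s)^2) <= (r-q)^2*((1-q-r)^2+s*s)).
  { apply Rmult_le_compat_l; [apply pow2_ge_0|nra]. }
  match goal with |- ?L <= _ => assert (EL: L = (s-r)^2*((1-q-r-s-t+q)^2+(t+q)^2) + (q-s)^2*((1-q-r-s-t+r)^2+(t+r)^2) + (r-q)^2*((1-q-r-s-t+s)^2+(t+s)^2)) by ring end.
  rewrite EL. lra.
Qed.
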